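(* Let $L$ be a distributive lattice with generated Boolean algebra $B$, $n\ge1$, $a_i,b_i\in L$ with $a_i<b_i$ for $i\in[n]$, $\widehat{\mathbf e}_I\in L^n$ ($I\subseteq[n]$) the tuple with $i$-th component $b_i$ if $i\in I$ and $a_i$ otherwise, $D=\{\widehat{\mathbf e}_I:I\subseteq[n]\}$, and $f\colon D\to L$ monotone and satisfying $$f(\widehat{\mathbf e}_{I\cup\{k\}})\wedge a_k\le f(\widehat{\mathbf e}_I)\le f(\widehat{\mathbf e}_{I\setminus\{k\}})\vee b_k\quad\text{for all } I\subseteq[n],\ k\in[n].$$ Then $p^-(\widehat{\mathbf e}_J)\ge f(\widehat{\mathbf e}_J)$ for all $J\subseteq[n]$.
   Context: $B$ is the Boolean algebra generated by $L$ (with $L$ embedded), with complement $x\mapsto x'$. $f$ monotone means $I\subseteq J\Rightarrow f(\widehat{\mathbf e}_I)\le f(\widehat{\mathbf e}_J)$. Define $c_I^-=f(\widehat{\mathbf e}_I)\wedge\bigwedge_{i\notin I}a_i'\in B$ and $p^-(\mathbf x)=\bigvee_{I\subseteq[n]}(c_I^-\wedge\bigwedge_{i\in I}x_i)$, a polynomial function over $B$. *)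

(* Defs.v *)
From HB Require Import structures.
From mathcomp Require Import all_boot all_order.
Set Implicit Arguments. Unset Strict Implicit. Unset Printing Implicit Defensive.
Import Order.Theory.
Local Open Scope order_scope.

Definition generates (dB : Order.disp_t) (B : ctbDistrLatticeType dB) (T : Type)
  (e : T -> B) : Prop :=
  forall S : {pred B},
    (forall x, e x \in S) -> \bot \in S -> \top \in S ->
    (forall x y, x \in S -> y \in S -> x `&` y \in S) ->
    (forall x y, x \in S -> y \in S -> x `|` y \in S) ->
    (forall x, x \in S -> ~` x \in S) ->
    forall x, x \in S.

Definition ehat (dL : Order.disp_t) (L : porderType dL) (n : nat)
  (a b : 'I_n -> L) (I : {set 'I_n}) : 'I_n -> L :=
  fun i => if i \in I then b i else a i.

Definition cminus (dL : Order.disp_t) (L : porderType dL)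
  (dB : Order.disp_t) (B : ctbDistrLatticeType dB) (e : L -> B) (n : nat)
  (a b : 'I_n -> L) (f : ('I_n -> L) -> L) (I : {set 'I_n}) : B :=
  e (f (ehat a b I)) `&` \meet_(i | i \notin I) ~` (e (a i)).

Definition pminus (dL : Order.disp_t) (L : porderType dL)
  (dB : Order.disp_t) (B : ctbDistrLatticeType dB) (e : L -> B) (n : nat)
  (a b : 'I_n -> L) (f : ('I_n -> L) -> L) (x : 'I_n -> B) : B :=
  \join_(I : {set 'I_n}) (cminus e a b f I `&` \meet_(i in I) x i).

(* Main.v *)
Require Import Defs.
From HB Require Import structures.
From mathcomp Require Import all_boot all_order.
Import Order.Theory.
Local Open Scope order_scope.

Lemma decomp_gen (d : Order.disp_t) (B : ctbDistrLatticeType d) (n : nat)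
  (c : 'I_n -> B) (y : B) :
  forall (P : {set 'I_n}) x, (forall S : {set 'I_n}, S \subset P ->
    x `&` \meet_(i in S) c i `&` \meet_(i in P :\: S) ~` c i <= y) -> x <= y.
Proof.
move=> P; move: {2}#|P| (erefl #|P|) => m; elim: m P => [|m IH] P hP x H.
  move: hP => /eqP; rewrite cards_eq0 => /eqP P0; subst P.
  have := H set0 (sub0set _).
  rewrite setD0 !big_set0 !meetx1; exact: id.
have [k kP] : exists k, k \in P.
  by apply/set0Pn; rewrite -card_gt0 hP.
have hP' : #|P :\ k| = m by move: hP; rewrite (cardsD1 k) kP => -[].
have -> : x = (x `&` c k) `|` (x `&` ~` c k).
  by rewrite -meetUr joinxC meetx1.
rewrite leUx; apply/andP; split; apply: (IH _ hP') => S SP.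
- have kS : k \notin S by apply/negP => /(subsetP SP); rewrite !inE eqxx.
  have := H (k |: S); rewrite subUset sub1set kP (subset_trans SP) ?subD1set //.
  rewrite big_setU1 //=.
  have -> : P :\: (k |: S) = P :\ k :\: S.
    by apply/setP => i; rewrite !inE; case: (i == k); rewrite ?andbF.
  move=> /(_ isT); apply: le_trans.
  by rewrite !meetA (meetC x) .
- have kS : k \notin P :\ k :\: S by rewrite !inE eqxx /= andbF.
  have := H S (subset_trans SP (subD1set _ _)).
  have -> : P :\: S = k |: (P :\ k :\: S).
    apply/setP => i; rewrite !inE; case: eqP => [->|//].
    rewrite kP andbT /=; apply/negP => /(subsetP SP); by rewrite !inE eqxx.
  rewrite big_setU1 //= => h. apply: le_trans h.
  by rewrite -!meetA (meetCA (~` c k)).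
Qed.

Theorem lemma3p4
  (dL : Order.disp_t) (L : distrLatticeType dL)
  (dB : Order.disp_t) (B : ctbDistrLatticeType dB)
  (e : L -> B) (e_inj : injective e)
  (e_meet : forall x y, e (x `&` y) = e x `&` e y)
  (e_join : forall x y, e (x `|` y) = e x `|` e y)
  (e_gen : generates e)
  (n : nat) (hn : (0 < n)%N)
  (a b : 'I_n -> L) (hab : forall i, a i < b i)
  (f : ('I_n -> L) -> L)
  (f_mono : forall I J : {set 'I_n}, I \subset J ->
              f (ehat a b I) <= f (ehat a b J))
  (f_cond : forall (I : {set 'I_n}) (k : 'I_n),
      f (ehat a b (k |: I)) `&` a k <= f (ehat a b I) /\
      f (ehat a b I) <= f (ehat a b (I :\ k)) `|` b k) :
  forall J : {set 'I_n},
    e (f (ehat a b J)) <= pminus e a b f (fun i => e (ehat a b J i)).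
Proof.
move=> J.
have emono : forall u v, u <= v -> e u <= e v.
  by move=> u v /meet_idPl <-; rewrite e_meet leIr.
have rem : forall (R K : {set 'I_n}),
    e (f (ehat a b K)) `&` \meet_(i in R) ~` e (b i) <= e (f (ehat a b (K :\: R))).
  move=> R K; move: {2}#|R| (erefl #|R|) => m; elim: m R => [|m IH] R hR.
    move: hR => /eqP; rewrite cards_eq0 => /eqP R0; subst R.
    by rewrite big_set0 meetx1 setD0.
  have [k kR] : exists k, k \in R.
    by apply/set0Pn; rewrite -cards_eq0 hR.
  have hR' : #|R :\ k| = m by move: hR; rewrite (cardsD1 k) kR => -[].
  rewrite (big_setD1 _ kR) /= meetCA.
  apply: le_trans (leI2 (lexx _) (IH _ hR')) _.
  have [_ h2] := f_cond (K :\: (R :\ k)) k.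
  apply: le_trans (leI2 (lexx _) (emono _ _ h2)) _.
  have -> : K :\: R = K :\: (R :\ k) :\ k.
    by apply/setP => i; rewrite !inE; case: eqP => [->|]; rewrite ?kR ?andbF.
  rewrite e_join meetUr meetCx joinx0; exact: leIr.
set x := fun i => e (ehat a b J i).
have xa : forall i, e (a i) <= x i.
  move=> i; rewrite /x /ehat; case: ifP => _ //; exact: emono (ltW (hab i)).
apply: (@decomp_gen _ _ _ x _ setT) => S _; rewrite setTD.
rewrite /pminus.
apply: le_trans (@joins_sup _ _ _ S xpredT _ isT).
rewrite /cminus !lexI; apply/andP; split; first (apply/andP; split).
- have sub : J :\: (J :\: S) \subset S.
    by apply/subsetP => i; rewrite !inE; case: (i \in S); case: (i \in J).
  apply: le_trans _ (emono _ _ (f_mono _ _ sub)).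
  apply: le_trans _ (rem (J :\: S) J).
  rewrite -meetA; apply: leI2 => //; apply: leIxr.
  apply/meetsP => i; rewrite !inE => /andP [iS iJ].
  apply: le_trans (meets_inf _ (j := i) _) _; first by rewrite inE.
  by rewrite /x /ehat iJ.
- apply/meetsP => i iS.
  apply: le_trans (leIr _ _) _.
  apply: le_trans (meets_inf _ (j := i) _) _; first by rewrite inE.
  by rewrite leC.
- exact: leIxl (leIr _ _).
Qed.
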